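(* Let $w:\mathbb N\to\mathbb R_{>0}$ be one of the weight functions $w(n)=n+1$, $w(n)=1$, or $w(n)=\frac1{n+1}$, and let $d_w(x,y)=\sum_{j\ge0}w(j)|x_j-y_j|$ on $\mathbb Z^\infty$. For $j\in\mathbb N$ let $X_j=\mathbb Z_{\ge0}^j\times\mathbb Z_{\le0}\times\mathbb Z^\infty=\{x\in\mathbb Z^\infty: x_0,\dots,x_{j-1}\ge0,\ x_j\le0\}$. Then $\{X_j\}_{j\in\mathbb N}$ is a coarsely excisive cover of $(\mathbb Z^\infty,d_w)$: for every nonempty finite $J\subseteq\mathbb N$ and $R>0$ there is $S>0$ with $\bigcap_{j\in J}N_w(X_j,R)\subseteq N_w(\bigcap_{j\in J}X_j,S)$.
   Context: $\mathbb Z^\infty=\bigoplus_{\mathbb N}\mathbb Z$ is the set of integer sequences with finitely many nonzero entries. $N_w(Y,R)=\{x\in\mathbb Z^\infty:\inf_{y\in Y}d_w(x,y)\le R\}$. A cover by closed subsets is coarsely excisive if the stated neighborhood condition holds for all nonempty finite subcollections and all $R>0$. *)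

(* Defs.v *)
From Stdlib Require Import Reals ZArith List Lia Lra.
Import ListNotations.
Open Scope R_scope.

(* Z^infty = finitely supported integer sequences, represented by lists;
   coordinate j is nth j x 0 (trailing entries are 0). Several lists may
   represent the same sequence; all notions below depend only on coordinates. *)
Definition Zinf := list Z.
Definition coord (x : Zinf) (j : nat) : Z := nth j x 0%Z.

Definition dist_w (w : nat -> R) (x y : Zinf) : R :=
  fold_right Rplus 0
    (map (fun j => w j * Rabs (IZR (coord x j - coord y j)))
         (seq 0 (Nat.max (length x) (length y)))).

(* N_w(Y,R) = { x | inf_{y in Y} d_w(x,y) <= R }, with inf over the empty set
   being +infinity; inf <= R unfolded as: for all eps > 0 some y in Y is
   within R + eps. *)
Definition Nbhd (w : nat -> R) (Y : Zinf -> Prop) (r : R) (x : Zinf) : Prop :=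
  forall eps, 0 < eps -> exists y, Y y /\ dist_w w x y < r + eps.

Definition Xj (j : nat) (x : Zinf) : Prop :=
  (forall i, (i < j)%nat -> (0 <= coord x i)%Z) /\ (coord x j <= 0)%Z.

(* Main.v *)
Require Import Defs.
From Stdlib Require Import Reals ZArith List Lia Lra.
Import ListNotations.
Open Scope R_scope.

Fixpoint Ssum (f : nat -> R) (n : nat) : R :=
  match n with O => 0 | S k => Ssum f k + f k end.

Lemma fold_plus_c : forall l c, fold_right Rplus c l = fold_right Rplus 0 l + c.
Proof. induction l; intros; simpl; [lra| rewrite IHl; lra]. Qed.

Lemma fold_seq : forall f n, fold_right Rplus 0 (map f (seq 0 n)) = Ssum f n.
Proof.
  induction n; [simpl; auto|].
  rewrite seq_S, map_app, fold_right_app. simpl.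
  rewrite fold_plus_c, IHn; lra.
Qed.

Lemma Ssum_stable : forall f M, (forall i, (M <= i)%nat -> f i = 0) ->
  forall N, (M <= N)%nat -> Ssum f N = Ssum f M.
Proof.
  intros f M H; induction N; intros.
  - assert (M = 0%nat) by lia; subst; auto.
  - destruct (Nat.eq_dec M (S N)). subst; auto.
    simpl. rewrite IHN by lia. rewrite H by lia. lra.
Qed.

Lemma Ssum_le : forall f g n, (forall i, f i <= g i) -> Ssum f n <= Ssum g n.
Proof. induction n; intros; simpl; [lra| pose proof (H n); specialize (IHn H); lra]. Qed.

Lemma Ssum_plus : forall f g n, Ssum (fun i => f i + g i) n = Ssum f n + Ssum g n.
Proof. induction n; simpl; [lra| rewrite IHn; lra]. Qed.

Definition Bsum (f : nat -> R) (J : list nat) : R :=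
  fold_right (fun j acc => f j + acc) 0 J.

Lemma Ssum_zero : forall n, Ssum (fun _ => 0) n = 0.
Proof. induction n; simpl; [lra| rewrite IHn; lra]. Qed.

Lemma Ssum_Bsum : forall (g : nat -> nat -> R) J n,
  Ssum (fun i => Bsum (fun j => g j i) J) n = Bsum (fun j => Ssum (g j) n) J.
Proof.
  induction J; intros; simpl.
  - apply Ssum_zero.
  - pose proof (Ssum_plus (fun i => g a i) (fun i => Bsum (fun j => g j i) J) n) as E.
    cbv beta in E. rewrite E, IHJ. reflexivity.
Qed.

Lemma Bsum_nonneg : forall f J, (forall k, 0 <= f k) -> 0 <= Bsum f J.
Proof. induction J; intros; simpl; [lra| pose proof (H a); specialize (IHJ H); lra]. Qed.

Lemma Bsum_le_member : forall f j J, (forall k, 0 <= f k) -> In j J -> f j <= Bsum f J.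
Proof.
  induction J; intros; simpl in *. contradiction.
  destruct H0. subst. pose proof (Bsum_nonneg f J H); lra.
  pose proof (H a). specialize (IHJ H H0). lra.
Qed.

Lemma Bsum_le_const : forall f J r, (forall j, In j J -> f j <= r) ->
  Bsum f J <= INR (length J) * r.
Proof.
  induction J; intros. simpl; lra.
  change (Bsum f (a::J)) with (f a + Bsum f J). change (length (a::J)) with (S (length J)).
  rewrite S_INR. assert (f a <= r) by (apply H; simpl; auto).
  assert (Bsum f J <= INR (length J) * r) by (apply IHJ; intros; apply H; simpl; auto).
  lra.
Qed.

Lemma coord_over : forall x j, (length x <= j)%nat -> coord x j = 0%Z.
Proof. intros; unfold coord; apply nth_overflow; auto. Qed.

Lemma dist_eq : forall w x y N, (length x <= N)%nat -> (length y <= N)%nat ->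
  dist_w w x y = Ssum (fun j => w j * Rabs (IZR (coord x j - coord y j))) N.
Proof.
  intros. unfold dist_w. rewrite fold_seq. symmetry; apply Ssum_stable; [|lia].
  intros. rewrite !coord_over by lia. simpl. rewrite Rabs_R0; ring.
Qed.

Definition a (x : Zinf) (k i : nat) : Z :=
  if Nat.ltb i k then Z.max 0 (- coord x i)
  else if Nat.eqb i k then Z.max 0 (coord x i) else 0%Z.

Definition A (w : nat -> R) x k := Ssum (fun i => w i * IZR (a x k i)) (S k).

Lemma a_zero : forall x k i, (S k <= i)%nat -> a x k i = 0%Z.
Proof.
  intros; unfold a. destruct (Nat.ltb_spec i k); [lia|].
  destruct (Nat.eqb_spec i k); [lia|auto].
Qed.

Lemma a_nonneg : forall x k i, (0 <= a x k i)%Z.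
Proof. intros; unfold a; destruct (i <? k)%nat; [lia|destruct (i =? k)%nat; lia]. Qed.

Lemma A_stable : forall w x k N, (S k <= N)%nat ->
  Ssum (fun i => w i * IZR (a x k i)) N = A w x k.
Proof.
  intros; unfold A; apply Ssum_stable; auto.
  intros; rewrite a_zero by auto; simpl; ring.
Qed.

Lemma lower : forall w x k y', (forall n, 0 <= w n) -> Xj k y' -> A w x k <= dist_w w x y'.
Proof.
  intros w x k y' Hw [H1 H2].
  set (N := Nat.max (Nat.max (length x) (length y')) (S k)).
  rewrite (dist_eq w x y' N) by (unfold N; lia).
  rewrite <- (A_stable w x k N) by (unfold N; lia).
  apply Ssum_le; intro i. apply Rmult_le_compat_l; auto.
  rewrite <- abs_IZR; apply IZR_le. unfold a.
  destruct (Nat.ltb_spec i k). specialize (H1 i H); lia.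
  destruct (Nat.eqb_spec i k). subst; lia. lia.
Qed.

Lemma A_le_r : forall w x k r, (forall n, 0 <= w n) -> Nbhd w (Xj k) r x -> A w x k <= r.
Proof.
  intros. apply Rnot_lt_le; intro.
  destruct (H0 (A w x k - r)) as [y [Hy Hd]]. lra.
  pose proof (lower w x k y H Hy). lra.
Qed.

Lemma le_m : forall J j, In j J -> (j <= fold_right Nat.max 0%nat J)%nat.
Proof. induction J; simpl; intros; [contradiction|]. destruct H; [subst; lia|]. specialize (IHJ j H); lia. Qed.

Lemma In_m : forall J, J <> [] -> In (fold_right Nat.max 0%nat J) J.
Proof.
  induction J; intros; [congruence|]. simpl.
  destruct J as [|b J']. simpl; left; lia.
  destruct (Nat.max_spec a0 (fold_right Nat.max 0%nat (b :: J'))) as [[_ E]|[_ E]]; rewrite E.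
  right; apply IHJ; discriminate. left; reflexivity.
Qed.

Definition fy (J : list nat) (m i : nat) (z : Z) : Z :=
  if Nat.ltb i m then (if in_dec Nat.eq_dec i J then 0%Z else Z.max z 0)
  else if Nat.eqb i m then Z.min z 0 else z.

Lemma nth_map_seq : forall (g : nat -> Z) n i d, (i < n)%nat -> nth i (map g (seq 0 n)) d = g i.
Proof.
  intros. rewrite (nth_indep _ d (g 0%nat)) by (rewrite length_map, length_seq; auto).
  rewrite map_nth, seq_nth; auto.
Qed.

Lemma coord_y : forall J m x N i, (length x <= N)%nat -> (S m <= N)%nat ->
  coord (map (fun i => fy J m i (coord x i)) (seq 0 N)) i = fy J m i (coord x i).
Proof.
  intros. unfold coord at 1. destruct (Nat.lt_ge_cases i N).
  - rewrite nth_map_seq; auto.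
  - rewrite nth_overflow by (rewrite length_map, length_seq; auto).
    rewrite coord_over by lia. unfold fy.
    destruct (Nat.ltb_spec i m); [lia|]. destruct (Nat.eqb_spec i m); [lia|auto].
Qed.

Lemma zbound : forall J m x i,
  (Z.abs (coord x i - fy J m i (coord x i)) <=
   a x m i + (if in_dec Nat.eq_dec i J then a x i i else 0))%Z.
Proof.
  intros. unfold fy, a. rewrite Nat.ltb_irrefl, Nat.eqb_refl.
  destruct (Nat.ltb_spec i m); destruct (in_dec Nat.eq_dec i J);
  destruct (Nat.eqb_spec i m); lia.
Qed.

Theorem lemma7p3p7 :
  forall w : nat -> R,
    (w = (fun n => INR n + 1) \/ w = (fun _ => 1) \/ w = (fun n => 1 / (INR n + 1))) ->
    forall (J : list nat), J <> [] ->
    forall r : R, 0 < r ->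
    exists S : R, 0 < S /\
      forall x : Zinf,
        (forall j, In j J -> Nbhd w (Xj j) r x) ->
        Nbhd w (fun y => forall j, In j J -> Xj j y) S x.
Proof.
  intros w Hw0 J HJ r Hr.
  assert (Hw : forall n, 0 <= w n).
  { intro n; pose proof (pos_INR n).
    destruct Hw0 as [E|[E|E]]; rewrite E; [lra|lra|].
    unfold Rdiv; apply Rmult_le_pos; [lra| left; apply Rinv_0_lt_compat; lra]. }
  exists ((INR (length J) + 1) * r). split.
  { pose proof (pos_INR (length J)). apply Rmult_lt_0_compat; lra. }
  intros x Hx eps Heps.
  set (m := fold_right Nat.max 0%nat J).
  set (N := Nat.max (length x) (S m)).
  set (y := map (fun i => fy J m i (coord x i)) (seq 0 N)).
  assert (Hcy : forall i, coord y i = fy J m i (coord x i)).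
  { intro i; unfold y; apply coord_y; unfold N; lia. }
  exists y. split.
  { intros j Hj. assert (j <= m)%nat by (apply le_m; auto). split.
    - intros i Hi. rewrite Hcy. unfold fy.
      destruct (Nat.ltb_spec i m); [|lia]. destruct (in_dec Nat.eq_dec i J); lia.
    - rewrite Hcy. unfold fy. destruct (Nat.ltb_spec j m).
      + destruct (in_dec Nat.eq_dec j J); [lia|contradiction].
      + destruct (Nat.eqb_spec j m); lia. }
  assert (Hly : length y = N) by (unfold y; rewrite length_map, length_seq; auto).
  rewrite (dist_eq w x y N) by (unfold N; lia).
  eapply Rle_lt_trans.
  { apply (Ssum_le _ (fun i => w i * IZR (a x m i) + Bsum (fun j => w i * IZR (a x j i)) J)).
    intro i. rewrite Hcy, <- abs_IZR.
    pose proof (zbound J m x i) as P. apply IZR_le in P. rewrite plus_IZR in P.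
    assert (Hnn : forall k, 0 <= w i * IZR (a x k i)).
    { intro k; apply Rmult_le_pos; auto; apply IZR_le; apply a_nonneg. }
    pose proof (Hw i) as Hwi.
    destruct (in_dec Nat.eq_dec i J) as [Hin|Hin].
    - pose proof (Bsum_le_member (fun j => w i * IZR (a x j i)) i J Hnn Hin) as HB.
      cbv beta in HB.
      apply Rmult_le_compat_l with (r := w i) in P; auto. lra.
    - pose proof (Bsum_nonneg (fun j => w i * IZR (a x j i)) J Hnn) as HB.
      apply Rmult_le_compat_l with (r := w i) in P; auto. simpl in P. lra. }
  pose proof (Ssum_plus (fun i => w i * IZR (a x m i))
                (fun i => Bsum (fun j => w i * IZR (a x j i)) J) N) as E.
  cbv beta in E. rewrite E.
  pose proof (Ssum_Bsum (fun j i => w i * IZR (a x j i)) J N) as E2.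
  cbv beta in E2. rewrite E2.
  rewrite A_stable by (unfold N; lia).
  assert (H1 : A w x m <= r).
  { apply A_le_r; auto. apply Hx. apply In_m; auto. }
  assert (H2 : Bsum (fun j => Ssum (fun i => w i * IZR (a x j i)) N) J <= INR (length J) * r).
  { apply Bsum_le_const. intros j Hj.
    assert (j <= m)%nat by (apply le_m; auto).
    rewrite A_stable by (unfold N; lia). apply A_le_r; auto. }
  lra.
Qed.
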